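(* Let $p$ be an odd prime and let $k$ be an integer with $2\le k\le p-1$. Let $k^{-1}$ denote the least non-negative integer congruent to the inverse of $k$ modulo $p$, and let $K=\min\{k,k^{-1}\}$. If $T$ is an orthogonal trade in $B_p$ of index $(1,k)$, then every symbol that occurs in $T$ occurs in $T$ more than $\log_K(p)+1$ times.
   Context: All arithmetic is modulo $p$. A Latin square of order $p$ is viewed as a set of (row, column, symbol) triples in $\mathbb{Z}_p^3$. For $1\le k\le p-1$, $B_p(k)$ is the Latin square with symbol $ki+j$ in cell $(i,j)$, $i,j\in\mathbb{Z}_p$; $B_p=B_p(1)$. A Latin trade in a Latin square $L$ is a subset $T\subseteq L$ for which there is a partial Latin square $T'$ (a disjoint mate) such that $T$ and $T'$ occupy the same set of cells, $T\cap T'=\emptyset$, and each row (respectively column) of $T$ contains the same set of symbols as the corresponding row (column) of $T'$. Two Latin squares of order $p$ are orthogonal if superimposing them yields each of the $p^2$ ordered pairs exactly once. An orthogonal trade of index $(\ell,k)$ is a Latin trade $T\subseteq B_p(\ell)$ having a disjoint mate $T'$ such that $(B_p(\ell)\setminus T)\cup T'$ is orthogonal to $B_p(k)$. *)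

(* Defs.v *)
From mathcomp Require Import all_boot.
From Stdlib Require Reals.
Set Implicit Arguments. Unset Strict Implicit. Unset Printing Implicit Defensive.

Definition trip (p : nat) := ('I_p * 'I_p * 'I_p)%type.

Definition cell {p} (t : trip p) : 'I_p * 'I_p := t.1.
Definition row {p} (t : trip p) : 'I_p := t.1.1.
Definition col {p} (t : trip p) : 'I_p := t.1.2.
Definition sym {p} (t : trip p) : 'I_p := t.2.

Definition Bp (p l : nat) : {set trip p} :=
  [set t : trip p | nat_of_ord (sym t) == (l * row t + col t) %% p].

Definition partial_latin p (P : {set trip p}) : Prop :=
  forall t u, t \in P -> u \in P ->
    [/\ cell t = cell u -> t = u,
        row t = row u -> sym t = sym u -> t = u &
        col t = col u -> sym t = sym u -> t = u].

Definition disjoint_mate p (T T' : {set trip p}) : Prop :=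
  [/\ partial_latin T',
      [set cell t | t in T] = [set cell t | t in T'],
      [disjoint T & T'],
      (forall r : 'I_p,
         [set sym t | t in T & row t == r] = [set sym t | t in T' & row t == r]) &
      (forall c : 'I_p,
         [set sym t | t in T & col t == c] = [set sym t | t in T' & col t == c])].

Definition latin_trade p (L T : {set trip p}) : Prop :=
  T \subset L /\ exists T', disjoint_mate T T'.

Definition orthogonal p (L1 L2 : {set trip p}) : Prop :=
  forall a b : 'I_p,
    #|[set x : 'I_p * 'I_p | ((x, a) \in L1) && ((x, b) \in L2)]| = 1.

Definition orthogonal_trade p (l k : nat) (T : {set trip p}) : Prop :=
  T \subset Bp p l /\
  exists T', disjoint_mate T T' /\ orthogonal ((Bp p l :\: T) :|: T') (Bp p k).

Definition kinv (p k : nat) : nat :=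
  if [pick x : 'I_p | (k * x) %% p == 1 %% p] is Some x then nat_of_ord x else 0.

Definition occ p (T : {set trip p}) (s : 'I_p) : nat :=
  #|[set t in T | sym t == s]|.

(* Main.v *)
From HB Require Import structures.
From mathcomp Require Import all_boot all_order all_algebra.
From mathcomp Require Import ring lra zify.
Set Implicit Arguments. Unset Strict Implicit. Unset Printing Implicit Defensive.
Import Order.TTheory GRing.Theory Num.Theory.
Local Open Scope ring_scope.

Section Had.
Variable R : realFieldType.

Lemma diag_ge0 n (A : 'M[R]_n) :
  (forall i j, i != j -> A i j <= 0) -> (forall i, 0 <= \sum_j A i j) ->
  forall i, 0 <= A i i.
Proof.
move=> Hoff Hsum i; have := Hsum i; rewrite (bigD1 i) //=.
have : \sum_(j | j != i) A i j <= 0.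
  by rewrite -oppr_ge0 -sumrN; apply: sumr_ge0 => j ji; rewrite oppr_ge0 Hoff // eq_sym.
lra.
Qed.

Lemma hadamard n (A : 'M[R]_n) :
  (forall i j, i != j -> A i j <= 0) -> (forall i, 0 <= \sum_j A i j) ->
  0 <= \det A <= \prod_i A i i.
Proof.
elim: n A => [|n IH] A Hoff Hsum.
  by rewrite det_mx00 big_ord0 lexx ler01.
have Hd := diag_ge0 Hoff Hsum.
have [a0|apos] := eqVneq (A 0 0) 0.
  have H0 : forall j, A 0 j = 0.
    move=> j; have [->|j0] := eqVneq j 0; first by [].
    have := Hsum 0; rewrite (bigD1 0) //= a0 add0r => Hs.
    have Hs' : \sum_(j | j != 0) - A 0 j = 0.
      apply/eqP; rewrite eq_le sumrN oppr_le0 Hs /= -sumrN.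
      by apply: sumr_ge0 => k k0; rewrite oppr_ge0 Hoff // eq_sym.
    have Hp : forall k, k != 0 -> 0 <= - A 0 k.
      by move=> k k0; rewrite oppr_ge0 Hoff // eq_sym.
    by have /eqP := (psumr_eq0P Hp Hs') j j0; rewrite oppr_eq0 => /eqP.
  rewrite (expand_det_row _ 0) big1 ?big_ord_recl ?a0 ?mul0r ?lexx //.
  by move=> j _; rewrite H0 mul0r.
have ap : 0 < A 0 0 by rewrite lt_def apos Hd.
change 'M[R]_(1 + n) in A.
have E0 : (lshift n (0 : 'I_1)) = (0 : 'I_(1 + n)) by apply: val_inj.
pose a : R := A 0 0.
pose S := drsubmx A - (a^-1) *: (dlsubmx A *m ursubmx A).
have ulE : ulsubmx A = a%:M.
  rewrite [LHS]mx11_scalar !mxE E0; congr (_%:M); congr (A _ _); exact: val_inj.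
have defA : A = block_mx 1%:M 0 (a^-1 *: dlsubmx A) 1%:M *m
                block_mx (ulsubmx A) (ursubmx A) 0 S.
  rewrite mulmx_block !mul1mx !mul0mx !addr0 ulE -scalemxAl mul_mx_scalar.
  rewrite scalerA mulVf ?scale1r; last by rewrite gt_eqF.
  by rewrite /S -scalemxAl addrC subrK -ulE submxK.
have detA : \det A = a * \det S.
  by rewrite [in LHS]defA det_mulmx det_lblock det_ublock !det1 mul1r ulE det_mx11 mxE eqxx mulr1n mul1r.
have SE : forall i j, S i j = A (rshift 1 i) (rshift 1 j)
     - a^-1 * (A (rshift 1 i) 0 * A 0 (rshift 1 j)).
  by move=> i j; rewrite !mxE big_ord1 !mxE E0.
have aip : 0 < a^-1 by rewrite invr_gt0.
have aiE : a^-1 * a = 1 by rewrite mulVf // gt_eqF.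
have r0 : forall i, rshift 1 i != (0 : 'I_(1 + n)) by [].
have HoffS : forall i j, i != j -> S i j <= 0.
  move=> i j ij; rewrite SE.
  have h1 : A (rshift 1 i) (rshift 1 j) <= 0.
    apply: (Hoff); apply: contra ij => /eqP h; apply/eqP; apply: val_inj; exact: (addnI (congr1 val h)).
  have h2 : 0 <= A (rshift 1 i) 0 * A 0 (rshift 1 j).
    by rewrite mulr_le0 // Hoff // eq_sym.
  have h3 := mulr_ge0 (ltW aip) h2. lra.
have HsumS : forall i, 0 <= \sum_j S i j.
  move=> i.
  rewrite (eq_bigr (fun j => A (rshift 1 i) (rshift 1 j)
     - a^-1 * A (rshift 1 i) 0 * A 0 (rshift 1 j))); last first.
    by move=> j _; rewrite SE mulrA.
  rewrite sumrB -mulr_sumr.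
  have Hr : 0 <= \sum_(j < 1 + n) A (rshift 1 i) j := Hsum _.
  rewrite big_split_ord big_ord1 E0 /= in Hr.
  have Hq : 0 <= \sum_(j < 1 + n) A 0 j := Hsum _.
  rewrite big_split_ord big_ord1 E0 /= in Hq.
  have Hq0 : \sum_j A 0 (rshift 1 j) <= 0.
    by rewrite -oppr_ge0 -sumrN; apply: sumr_ge0 => j _; rewrite oppr_ge0 (Hoff) // eq_sym.
  move: Hr Hq Hq0.
  set r := \sum_j _. set q := \sum_j A 0 _. set b := A (rshift 1 i) 0 => Hr Hq Hq0.
  have b0 : b <= 0 by apply: (Hoff).
  have h1 : b * (q + a) <= 0.
    rewrite mulr_le0_ge0 //; rewrite -/a in Hq; lra.
  rewrite mulrDr in h1.
  have h2 : a^-1 * (b * q) <= a^-1 * (- (b * a)).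
    by rewrite ler_wpM2l // ?(ltW aip) //; lra.
  have h3 : a^-1 * (- (b * a)) = - b by rewrite mulrN (mulrC b a) mulrA aiE mul1r.
  rewrite h3 in h2.
  rewrite -mulrA. lra.
have [dS0 dSle] := andP (IH S HoffS HsumS).
have HdS := diag_ge0 HoffS HsumS.
have Hprod : \prod_i S i i <= \prod_i A (rshift 1 i) (rshift 1 i).
  apply: ler_prod => i _; rewrite HdS /= SE.
  have h2 : 0 <= A (rshift 1 i) 0 * A 0 (rshift 1 i).
    by rewrite mulr_le0 // Hoff // eq_sym.
  have h3 := mulr_ge0 (ltW aip) h2. lra.
rewrite detA (_ : \prod_(i < n.+1) A i i = \prod_(i < 1 + n) A i i) // big_split_ord big_ord1 E0 /=.
rewrite mulr_ge0 ?(ltW ap) //=.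
rewrite ler_wpM2l ?(ltW ap) //.
exact: le_trans dSle Hprod.
Qed.
End Had.
Lemma sum_ind (F : nzRingType) (I : finType) (v : I -> F) (a : I) (P : pred I) :
  \sum_i v i * ((a == i) && P i)%:R = (P a)%:R * v a.
Proof.
rewrite (bigD1 a) //= eqxx /= big1 ?addr0; last first.
  by move=> i ia; rewrite eq_sym (negbTE ia) mulr0.
by case: (P a); rewrite ?mulr1 ?mul1r ?mulr0 ?mul0r.
Qed.

Section Core.
Variables (p c : nat) (fa fb : 'I_p -> 'I_p) (D : {set 'I_p}).

Definition Bm (F : nzRingType) : 'M[F]_p := \matrix_(i, j)
  (if i \in D then c%:R * (i == j)%:R - ((fa i == j) && (j \in D))%:R
     - (c%:R - 1) * ((fb i == j) && (j \in D))%:R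
   else (i == j)%:R).

Lemma Bm_map (F G : nzRingType) (f : {rmorphism F -> G}) :
  map_mx f (Bm F) = Bm G.
Proof.
apply/matrixP => i j; rewrite !mxE; case: ifP => _.
  by rewrite !(rmorphB, rmorphM, rmorph1, rmorph_nat).
by rewrite rmorph_nat.
Qed.

Lemma Bm_row (F : comNzRingType) (v : 'I_p -> F) j :
  \sum_i v i * Bm F j i =
  if j \in D then c%:R * v j - (fa j \in D)%:R * v (fa j)
        - (c%:R - 1) * ((fb j \in D)%:R * v (fb j))
  else v j.
Proof.
under eq_bigr => i _ do rewrite mxE.
case: ifP => jD.
  rewrite (eq_bigr (fun i => c%:R * (v i * ((j == i) && true)%:R)
       - v i * ((fa j == i) && (i \in D))%:R
       - (c%:R - 1) * (v i * ((fb j == i) && (i \in D))%:R))); last first.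
    by move=> i _; rewrite andbT; ring.
  by rewrite !sumrB -!mulr_sumr !sum_ind /= mul1r.
rewrite (eq_bigr (fun i => v i * ((j == i) && true)%:R)) ?sum_ind ?mul1r //.
by move=> i _; rewrite andbT.
Qed.

Lemma maxprin (F : realFieldType) (C : {set 'I_p}) r (y : 'I_p -> F) :
  (1 < c)%N -> D = C :\ r -> r \in C ->
  (forall i, i \in C -> fa i \in C /\ fb i \in C) ->
  (forall S : {set 'I_p}, S \subset C -> S != set0 ->
     (forall i, i \in S -> fa i \in S /\ fb i \in S) -> S = C) ->
  (forall j, j \notin D -> y j = 0) ->
  (forall j, j \in D -> c%:R * y j = y (fa j) + (c%:R - 1) * y (fb j)) ->
  forall i, y i <= 0.
Proof.
move=> c1 DE rC Ccl Cmin y0 yh i.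
rewrite leNgt; apply/negP => yi.
case: (@arg_maxP _ F 'I_p i xpredT y isT) => i0 _ Hmax.
set M := y i0.
have Mi : y i <= M by apply: Hmax.
have Mp : 0 < M by apply: lt_le_trans Mi.
have c1F : (0 : F) < c%:R - 1.
  by rewrite subr_gt0 (_ : 1 = 1%:R) // ltr_nat.
have inD : forall j, y j = M -> j \in D.
  move=> j yj; apply: contraT => /y0 yj0; move: Mp; rewrite -yj yj0 ltxx //.
pose S := [set j in C | y j == M].
have SC : S \subset C by apply/subsetP => j; rewrite inE => /andP [].
have i0D : i0 \in D by apply: inD.
have i0C : i0 \in C by move: i0D; rewrite DE inE => /andP [].
have Sn0 : S != set0 by apply/set0Pn; exists i0; rewrite inE i0C eqxx.
have Scl : forall j, j \in S -> fa j \in S /\ fb j \in S.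
  move=> j; rewrite inE => /andP [jC /eqP yj].
  have jD := inD _ yj.
  have [faC fbC] := Ccl _ jC.
  have h := yh _ jD; rewrite yj in h.
  have ha : y (fa j) <= M by apply: Hmax.
  have hb : y (fb j) <= M by apply: Hmax.
  have hb' : (c%:R - 1) * y (fb j) <= (c%:R - 1) * M by rewrite ler_wpM2l // ltW.
  have ea : y (fa j) = M by apply/eqP; rewrite eq_le ha /=; lra.
  have eb : (c%:R - 1) * y (fb j) = (c%:R - 1) * M by lra.
  move/(mulfI (lt0r_neq0 c1F)): eb => eb.
  by rewrite !inE faC fbC ea eb eqxx.
have SeC := Cmin S SC Sn0 Scl.
have : r \in S by rewrite SeC.
rewrite inE => /andP [_ /eqP yr].
have := inD _ yr; rewrite DE !inE eqxx //.
Qed.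
End Core.

Lemma Fp_ord_inj p (pp : prime p) (i j : 'I_p) : (i%:R : 'F_p) = j%:R -> i = j.
Proof.
move/(congr1 (@nat_of_ord _)); rewrite !val_Fp_nat // !modn_small //; exact: val_inj.
Qed.

Lemma core (p c : nat) (R : {set 'I_p}) (fa fb : 'I_p -> 'I_p) :
  prime p -> (1 < c)%N -> R != set0 ->
  (forall i, i \in R -> [/\ fa i \in R, fb i \in R, fb i != i &
      (c%:R * i%:R = (fa i)%:R + (c%:R - 1) * (fb i)%:R :> 'F_p)]) ->
  (p <= c ^ (#|R|).-1)%N.
Proof.
move=> pp c1 Rn0 H.
pose closedb (C : {set 'I_p}) := [forall i in C, (fa i \in C) && (fb i \in C)].
have Pex : exists n, [exists C : {set 'I_p},
    [&& C \subset R, C != set0, closedb C & #|C| == n]].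
  exists #|R|; apply/existsP; exists R; rewrite subxx Rn0 eqxx /= andbT.
  by apply/forallP => i; apply/implyP => /H [-> -> _ _].
case: (ex_minnP Pex) => m /existsP [C /and4P [CR Cn0 Ccl /eqP Cm]] Hmin.
have Cclo : forall i, i \in C -> fa i \in C /\ fb i \in C.
  by move=> i iC; move/forallP: Ccl => /(_ i); rewrite iC /= => /andP [].
have Cmin : forall S : {set 'I_p}, S \subset C -> S != set0 ->
    (forall i, i \in S -> fa i \in S /\ fb i \in S) -> S = C.
  move=> S SC Sn0 Scl; apply/eqP; rewrite eqEcard SC Cm /=.
  apply: Hmin; apply/existsP; exists S; rewrite (subset_trans SC CR) Sn0 eqxx andbT /=.
  by apply/forallP => i; apply/implyP => /Scl [-> ->].
case/set0Pn: Cn0 => r rC.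
pose D := C :\ r.
have DC : forall j, j \in D -> j \in C by move=> j; rewrite inE => /andP [].
have CRi : forall j, j \in C -> j \in R by move=> j /(subsetP CR).
pose B := Bm c fa fb D int.
have Bq : map_mx (intr : int -> rat) B = Bm c fa fb D rat by rewrite Bm_map.
have DE : D = C :\ r by [].
have detq : \det (Bm c fa fb D rat) != 0.
  rewrite -det_tr; apply/det0P => [[v vn0 vB]].
  pose y j := v 0 j.
  have Hy : forall j, (if j \in D then c%:R * y j - (fa j \in D)%:R * y (fa j)
        - (c%:R - 1) * ((fb j \in D)%:R * y (fb j)) else y j) = 0.
    move=> j; rewrite -Bm_row.
    transitivity ((v *m (Bm c fa fb D rat)^T) 0 j); last by rewrite vB mxE.
    by rewrite !mxE; apply: eq_bigr => i _; rewrite !mxE.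
  have y0 : forall j, j \notin D -> y j = 0.
    by move=> j jD; have := Hy j; rewrite (negbTE jD).
  have ind : forall a, (a \in D)%:R * y a = y a.
    move=> a; case: (boolP (a \in D)) => aD; first by rewrite mul1r.
    by rewrite mul0r y0.
  have yh : forall j, j \in D -> c%:R * y j = y (fa j) + (c%:R - 1) * y (fb j).
    move=> j jD; have := Hy j; rewrite jD !ind => h.
    by apply/eqP; rewrite -subr_eq0 -h; apply/eqP; ring.
  have yle := maxprin (y:=y) c1 DE rC Cclo Cmin y0 yh.
  have yge : forall i, - y i <= 0.
    apply: (maxprin (y:=fun i => - y i) c1 DE rC Cclo Cmin).
      by move=> j /y0 ->; rewrite oppr0.
    by move=> j /yh h; rewrite mulrN h; ring.
  move/eqP: vn0; apply; apply/rowP => j; rewrite !mxE.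
  by apply/eqP; rewrite eq_le yle /= -oppr_le0 yge.
have c1q : (1 : rat) <= c%:R by rewrite ler1n ltnW.
have Hoff : forall i j, i != j -> Bm c fa fb D rat i j <= 0.
  move=> i j ij; rewrite mxE (negbTE ij) mulr0; case: ifP => _ //.
  have h1 : (0 : rat) <= ((fa i == j) && (j \in D))%:R by apply: ler0n.
  have h2 : (0 : rat) <= (c%:R - 1) * ((fb i == j) && (j \in D))%:R.
    by apply: mulr_ge0; [lra | apply: ler0n].
  lra.
have Hsum : forall i, 0 <= \sum_j Bm c fa fb D rat i j.
  move=> i; have := Bm_row c fa fb D (fun _ => (1 : rat)) i.
  under eq_bigr => j _ do rewrite mul1r.
  move=> ->; case: ifP => _ //; rewrite !mulr1.
  have h1 : ((fa i \in D)%:R : rat) <= 1 by case: (fa i \in D).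
  case: (fb i \in D); rewrite ?mulr1 ?mulr0; lra.
have [dq0 dqle] := andP (hadamard Hoff Hsum).
have Hprod : \prod_i Bm c fa fb D rat i i <= c%:R ^+ #|D|.
  rewrite -prodr_const [X in _ <= X]big_mkcond /=; apply: ler_prod => i _.
  rewrite (diag_ge0 Hoff Hsum) /= mxE eqxx; case: ifP => iD //.
  have [_ _ fbi _] := H i (CRi i (DC i iD)).
  rewrite (negbTE fbi) /= mulr0 subr0 mulr1.
  have h1 : (0 : rat) <= ((fa i == i) && (i \in D))%:R by apply: ler0n.
  by rewrite lerBlDr lerDl.
set d := \det B.
have dq : (d%:~R : rat) = \det (Bm c fa fb D rat) by rewrite -Bq det_map_mx.
have d0 : 0 <= d by rewrite -(ler_int rat) dq.
have dle : d <= (c ^ #|D|)%N%:Z.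
  rewrite -(ler_int rat) dq /=; apply: le_trans dqle (le_trans Hprod _).
  by rewrite -natrX.
have dn0 : d != 0 by rewrite -(intr_eq0 rat) dq.
have dF : (d%:~R : 'F_p) = 0.
  rewrite /d -det_map_mx Bm_map; apply/eqP; rewrite -det_tr; apply/det0P.
  pose v j : 'F_p := if j \in D then j%:R - r%:R else 0.
  have indv : forall a, a \in C -> (a \in D)%:R * v a = a%:R - r%:R.
    move=> a aC; rewrite /v; case: (boolP (a \in D)) => aD; first by rewrite mul1r.
    move: aD; rewrite !inE aC andbT negbK => /eqP ->; by rewrite mul0r subrr.
  exists (\row_j v j).
    have [_ fbR fbr _] := H r (CRi r rC); have [_ fbC] := Cclo r rC.
    have fbD : fb r \in D by rewrite !inE fbr fbC.
    apply/eqP => /rowP /(_ (fb r)); rewrite !mxE /v fbD => /eqP; rewrite subr_eq0.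
    by move=> /eqP /(Fp_ord_inj pp) /eqP; rewrite (negbTE fbr).
  apply/rowP => j; rewrite !mxE.
  transitivity (\sum_i v i * Bm c fa fb D 'F_p j i).
    by apply: eq_bigr => i _; rewrite !mxE.
  rewrite Bm_row; case: ifP => jD; last by rewrite /v jD.
  have jC := DC j jD; have [faR fbR _ hj] := H j (CRi j jC).
  have [faC fbC] := Cclo j jC.
  rewrite !indv // /v jD mulrBr hj; ring.
rewrite -(gez0_abs d0) /= in dF dle dn0.
rewrite lez_nat in dle.
have dpos : (0 < `|d|)%N by rewrite lt0n; apply: contra dn0 => /eqP ->.
have pd : (p %| `|d|)%N.
  have h : (`|d|%:R : 'F_p) = 0 by rewrite -dF pmulrn.
  move/(congr1 (@nat_of_ord _)): h; rewrite val_Fp_nat //= => h; by rewrite /dvdn h.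
have pled := dvdn_leq dpos pd.
have cardC : #|C| = (#|D|).+1 by rewrite (cardsD1 r C) rC.
have CleR := subset_leq_card CR.
apply: (leq_trans pled); apply: (leq_trans dle).
rewrite leq_pexp2l ?(ltnW c1) //.
rewrite -ltnS prednK ?cardC //; first by rewrite -cardC.
by rewrite card_gt0.
Qed.

Local Close Scope ring_scope.

Require Import Defs.

Section Ext.
Local Open Scope ring_scope.
Variable p : nat.
Hypothesis pp : prime p.
Local Notation phi n := (n%:R : 'F_p).

Lemma phi_eq_mod m n : (phi m == phi n) = (m %% p == n %% p)%N.
Proof. by rewrite -val_eqE /= !val_Fp_nat. Qed.

Lemma phi_surj (f : 'F_p) : exists i : 'I_p, phi i = f.
Proof.
have lt : (f < p)%N by rewrite -[X in (_ < X)%N](Fp_cast pp) ltn_ord.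
exists (Ordinal lt); apply: val_inj => /=; rewrite val_Fp_nat // modn_small //.
Qed.

Lemma ord_mod (i : 'I_p) n : (i == (n %% p)%N :> nat) = (phi i == phi n).
Proof. rewrite phi_eq_mod (modn_small (ltn_ord i)); by apply/eqP/eqP. Qed.

Lemma inBp l (t : trip p) :
  (t \in Bp p l) = (phi (sym t) == phi l * phi (Defs.row t) + phi (Defs.col t)).
Proof. by rewrite inE ord_mod natrD natrM. Qed.

Lemma card1_eq (T : finType) (A : {set T}) x y :
  #|A| = 1%N -> x \in A -> y \in A -> x = y.
Proof.
by move/eqP/cards1P => [z ->]; rewrite !inE => /eqP -> /eqP ->.
Qed.

Lemma phik_facts k : (2 <= k <= p - 1)%N -> phi k != 0 /\ phi k - 1 != 0.
Proof.
case/andP => k2 kp.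
have p1 := prime_gt1 pp.
have kp' : (k < p)%N by lia.
split.
  by rewrite -[0]/(0%:R) phi_eq_mod mod0n modn_small //; lia.
rewrite subr_eq0 -[1]/(1%:R) phi_eq_mod !modn_small //; lia.
Qed.


Lemma kinv_spec k : (2 <= k <= p - 1)%N ->
  phi k * phi (kinv p k) = 1 /\ (1 < kinv p k)%N /\ (kinv p k < p)%N.
Proof.
move=> hk; have [k0 k1] := phik_facts hk.
have p1 := prime_gt1 pp.
have kp : (k < p)%N by lia.
rewrite /kinv; case: pickP => [x /eqP hx | none].
  have e : phi k * phi x = 1.
    by rewrite -natrM -Fp_nat_mod // hx Fp_nat_mod.
  split => //; split => //.
  rewrite ltnNge leq_eqVlt ltnS leqn0; apply/negP => /orP [] /eqP x1.
    by move: e; rewrite x1 mulr1 => /eqP; rewrite -subr_eq0 (negbTE k1).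
  by move: e; rewrite x1 mulr0 => /eqP; rewrite eq_sym oner_eq0.
have [x hx] := phi_surj (phi k)^-1.
have := none x; rewrite -phi_eq_mod natrM hx mulfV //.
Qed.

Variables (k : nat) (T T' : {set trip p}) (s : 'I_p).
Hypothesis hk : (2 <= k <= p - 1)%N.
Hypothesis TB : T \subset Bp p 1.
Hypothesis Hm : disjoint_mate T T'.
Hypothesis Ho : orthogonal ((Bp p 1 :\: T) :|: T') (Bp p k).

Definition Rs := [set Defs.row t | t in [set t in T | sym t == s]].

Lemma inRs i : (i \in Rs) <-> exists2 t, t \in T & Defs.row t = i /\ sym t = s.
Proof.
split.
  by case/imsetP => t; rewrite inE => /andP [tT /eqP ts] ->; exists t.
by case=> t tT [ti ts]; apply/imsetP; exists t; rewrite ?inE ?tT ?ts ?eqxx.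
Qed.

Lemma tBp (t : trip p) : t \in T -> phi (sym t) = phi (Defs.row t) + phi (Defs.col t).
Proof. by move=> /(subsetP TB); rewrite inBp mul1r => /eqP. Qed.

Lemma extract_u u : u \in T' -> sym u = s ->
  [/\ Defs.row u \in Rs,
      (exists2 z, z \in Rs & phi z + phi (Defs.col u) = phi s),
      phi s != phi (Defs.row u) + phi (Defs.col u) &
      exists2 b, b \in Rs & (phi k - 1) * phi b = phi k * phi (Defs.row u) + phi (Defs.col u) - phi s].
Proof.
case: Hm => PL Hcell Hdis Hrow Hcol uT' us.
have E1 : Defs.row u \in Rs.
  have : sym u \in [set sym t | t in T' & Defs.row t == Defs.row u].
    by apply/imsetP; exists u; rewrite // inE uT' eqxx.
  rewrite -Hrow => /imsetP [t]; rewrite inE => /andP [tT /eqP tr] ts.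
  by apply/inRs; exists t => //; split => //; rewrite -ts.
have E3 : phi s != phi (Defs.row u) + phi (Defs.col u).
  apply/negP => /eqP e.
  have : cell u \in [set cell t | t in T'] by apply/imsetP; exists u.
  rewrite -Hcell => /imsetP [t0 t0T c0].
  have h := tBp t0T.
  have rr : Defs.row t0 = Defs.row u by rewrite /Defs.row -/(cell t0) -c0.
  have cc : Defs.col t0 = Defs.col u by rewrite /Defs.col -/(cell t0) -c0.
  rewrite rr cc -e -us in h.
  have := Fp_ord_inj pp h => st.
  have tu : t0 = u.
    by move: c0 st; rewrite /cell /sym; case: (t0) => [c1 s1]; case: (u) => [c2 s2] /= -> ->.
  by move: (disjointFr Hdis t0T); rewrite tu uT'.
split => //.
  have : sym u \in [set sym t | t in T' & Defs.col t == Defs.col u].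
    by apply/imsetP; exists u; rewrite // inE uT' eqxx.
  rewrite -Hcol => /imsetP [t]; rewrite inE => /andP [tT /eqP tc] ts.
  exists (Defs.row t); first by apply/inRs; exists t => //; split => //; rewrite -ts.
  by rewrite -tc -tBp // -ts us.
have [k0 k1] := phik_facts hk.
set i := Defs.row u; set cc := Defs.col u.
have [b0 hb0] := phi_surj (phi k * phi i + phi cc).
have [bb hbb] := phi_surj ((phi k - 1)^-1 * (phi k * phi i + phi cc - phi s)).
have [cc2 hcc2] := phi_surj (phi s - phi bb).
have e : (phi k - 1) * phi bb = phi k * phi i + phi cc - phi s.
  by rewrite hbb mulrA mulfV // mul1r.
pose x1 := cell u. pose x2 := (bb, cc2).
have u1 : (x1, s) = u by rewrite /x1 /cell -us; case: (u).
have hx1 : x1 \in [set x | ((x, s) \in (Bp p 1 :\: T) :|: T') && ((x, b0) \in Bp p k)].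
  rewrite inE u1 in_setU uT' orbT /= (inBp k (x1, b0)); apply/eqP.
  by rewrite hb0 /i /cc /x1 /cell.
have x2T : (x2, s) \in T.
  apply/negPn/negP => nT.
  have hx2 : x2 \in [set x | ((x, s) \in (Bp p 1 :\: T) :|: T') && ((x, b0) \in Bp p k)].
    rewrite inE in_setU in_setD nT /= (inBp 1 (x2, s)) (inBp k (x2, b0)) /Defs.row /Defs.col /sym /=.
    apply/andP; split; first (apply/orP; left); apply/eqP.
      by rewrite hcc2; ring.
    rewrite hb0 hcc2.
    have -> : phi k * phi bb + (phi s - phi bb) = (phi k - 1) * phi bb + phi s by ring.
    by rewrite e; ring.
  have x12 := card1_eq (Ho s b0) hx1 hx2.
  move/negP: E3; apply; apply/eqP.
  have -> : Defs.row u = bb by rewrite /Defs.row -/(cell u) -/x1 x12.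
  have -> : Defs.col u = cc2 by rewrite /Defs.col -/(cell u) -/x1 x12.
  by rewrite hcc2; ring.
by exists bb => //; apply/inRs; exists (x2, s).
Qed.

Lemma vers_k i : i \in Rs -> exists a b : 'I_p,
  [&& a \in Rs, b \in Rs, b != i & phi k * phi i == phi a + (phi k - 1) * phi b].
Proof.
move=> /inRs [t tT [ti ts]].
case: Hm => PL Hcell Hdis Hrow Hcol.
have : sym t \in [set sym t | t in T & Defs.row t == i].
  by apply/imsetP; exists t; rewrite // inE tT ti eqxx.
rewrite Hrow => /imsetP [u]; rewrite inE => /andP [uT' /eqP ui] ut.
have us : sym u = s by rewrite -ut.
have [_ [z zR hz] E3 [b bR hb]] := extract_u uT' us.
rewrite ui in E3 hb.
exists z, b; rewrite zR bR /=; apply/andP; split.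
  apply/eqP => bi; move/negP: E3; apply; apply/eqP.
  rewrite bi in hb.
  have -> : phi s = phi k * phi i + phi (Defs.col u) - (phi k - 1) * phi i by rewrite hb; ring.
  ring.
by apply/eqP; rewrite hb -hz; ring.
Qed.

Lemma vers_kinv j : j \in Rs -> exists a b : 'I_p,
  [&& a \in Rs, b \in Rs, b != j &
   phi (kinv p k) * phi j == phi a + (phi (kinv p k) - 1) * phi b].
Proof.
move=> /inRs [t tT [tj ts]].
have [k0 k1] := phik_facts hk.
have [kk' _] := kinv_spec hk.
case: Hm => PL Hcell Hdis Hrow Hcol.
set c := Defs.col t.
have : sym t \in [set sym x | x in T & Defs.col x == c].
  by apply/imsetP; exists t; rewrite // inE tT eqxx.
rewrite Hcol => /imsetP [u]; rewrite inE => /andP [uT' /eqP uc] ut.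
have us : sym u = s by rewrite -ut.
have [iR _ E3 [b bR hb]] := extract_u uT' us.
rewrite uc in E3 hb.
have hs : phi s = phi j + phi c by rewrite -ts -tj tBp.
set i := Defs.row u in iR E3 hb.
set k' := kinv p k in kk' *.
exists i, b; rewrite iR bR /=; apply/andP; split.
  apply/eqP => bj; move/negP: E3; apply; apply/eqP.
  rewrite bj hs in hb.
  have h : phi k * phi j = phi k * phi i.
    apply/eqP; rewrite -subr_eq0; have -> : phi k * phi j - phi k * phi i =
      (phi k - 1) * phi j - (phi k * phi i + phi c - (phi j + phi c)) by ring.
    by rewrite hb subrr.
  have := mulfI k0 h => /(Fp_ord_inj pp) ji.
  by rewrite hs ji.
apply/eqP; apply/eqP; rewrite -subr_eq0.
have -> : phi k' * phi j - (phi i + (phi k' - 1) * phi b) =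
   phi k' * ((phi k - 1) * phi b - (phi k * phi i + phi c - phi s))
   - (phi k * phi k' - 1) * (phi b - phi i) by rewrite hs; ring.
by rewrite hb subrr mulr0 kk' subrr mul0r subrr.
Qed.

End Ext.

Lemma choose_ab p (R : {set 'I_p}) (P : 'I_p -> 'I_p -> 'I_p -> bool) :
  (forall i, i \in R -> exists a b, P i a b) ->
  exists fa fb : 'I_p -> 'I_p, forall i, i \in R -> P i (fa i) (fb i).
Proof.
move=> H.
exists (fun i => if [pick ab : 'I_p * 'I_p | P i ab.1 ab.2] is Some ab then ab.1 else i).
exists (fun i => if [pick ab : 'I_p * 'I_p | P i ab.1 ab.2] is Some ab then ab.2 else i).
move=> i /H [a [b h]]; case: pickP => [ab //| none].
by have := none (a, b); rewrite /= h.
Qed.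

Lemma strict p c m : prime p -> (1 < c < p)%N -> (p <= c ^ m)%N -> (p < c ^ m)%N.
Proof.
move=> pp /andP [c1 cp]; rewrite leq_eqVlt => /orP [/eqP E|//].
case: m E => [|m] E; first by move: (prime_gt1 pp); rewrite E.
have : (c %| p)%N by rewrite E expnS dvdn_mulr.
by case/primeP: pp => _ /[apply] /orP [] /eqP ec; move: c1 cp; rewrite ec ?ltnn.
Qed.

Local Open Scope ring_scope.
Lemma main_nat p k (T : {set trip p}) s : prime p -> (2 <= k <= p - 1)%N ->
  orthogonal_trade 1 k T -> (0 < occ T s)%N ->
  (p < minn k (kinv p k) ^ (occ T s).-1)%N.
Proof.
move=> pp hk [TB [T' [Hm Ho]]] occ0.
have oc : occ T s = #|Rs T s|.
  rewrite /occ /Rs card_in_imset // => t1 t2; rewrite !inE => /andP [t1T /eqP s1] /andP [t2T /eqP s2] rr.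
  have h1 := tBp pp TB t1T; have h2 := tBp pp TB t2T.
  have cc : Defs.col t1 = Defs.col t2.
    apply: (Fp_ord_inj pp); apply: (addrI ((Defs.row t1)%:R : 'F_p)).
    by rewrite -h1 rr -h2 s1 s2.
  move: rr cc s1 s2; rewrite /Defs.row /Defs.col /sym.
  case: t1 {h1 t1T} => [[r1 c1] q1]; case: t2 {h2 t2T} => [[r2 c2] q2] /=.
  by move=> -> -> -> ->.
rewrite oc in occ0 *.
have Rn0 : Rs T s != set0 by rewrite -card_gt0.
have p1 := prime_gt1 pp.
have [kk' [kk1 kkp]] := kinv_spec pp hk.
have Hc : forall c, (1 < c)%N -> (forall i, i \in Rs T s -> exists a b : 'I_p,
  [&& a \in Rs T s, b \in Rs T s, b != i &
   (c%:R : 'F_p) * i%:R == a%:R + (c%:R - 1) * b%:R]) ->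
  (p <= c ^ (#|Rs T s|).-1)%N.
  move=> c c1 H; have [fa [fb Hf]] := choose_ab H.
  apply: (@core p c _ fa fb pp c1 Rn0) => i /Hf /and4P [a b c' /eqP e]; by split.
have k2 : (1 < k)%N by case/andP: hk.
have kp : (k < p)%N by case/andP: hk => _; lia.
have Hk := Hc k k2 (vers_k pp (s:=s) hk TB Hm Ho).
have Hki := Hc (kinv p k) kk1 (vers_kinv pp (s:=s) hk TB Hm Ho).
rewrite /minn; case: (ltnP k (kinv p k)) => _; apply: strict => //; apply/andP; split => //.
Qed.

Local Close Scope ring_scope.

From mathcomp Require Import all_boot.
From Stdlib Require Import Reals Lra.

Lemma INR_expn K m : INR (expn K m) = (INR K ^ m)%R.
Proof. elim: m => [//|m IH]; rewrite expnS -multE mult_INR IH //. Qed.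

Theorem theorem3p4 (p k : nat) (T : {set trip p}) :
  prime p -> odd p -> 2 <= k <= p - 1 ->
  orthogonal_trade 1 k T ->
  forall s : 'I_p, 0 < occ T s ->
    (Rdiv (ln (INR p)) (ln (INR (minn k (kinv p k)))) + 1 < INR (occ T s))%R.
Proof.
move=> pp _ hk HT s o0.
have H := main_nat pp hk HT o0.
have [_ [kk1 _]] := kinv_spec pp hk.
have K2 : (1 < minn k (kinv p k))%N by rewrite leq_min kk1 andbT; case/andP: hk.
move: H o0 K2.
set n := occ T s; set K := minn k (kinv p k).
case: n => [//|m] H _ K2; rewrite /= in H.
have Kpos : (0 < INR K)%R by apply: lt_0_INR; apply/ltP; apply: ltnW.
have lnK : (0 < ln (INR K))%R.
  rewrite -ln_1; apply: ln_increasing; first exact: Rlt_0_1.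
  by rewrite -[1%R]/(INR 1); apply: lt_INR; apply/ltP.
have hl : (ln (INR p) < INR m * ln (INR K))%R.
  rewrite -ln_pow // -INR_expn; apply: ln_increasing.
    by apply: lt_0_INR; apply/ltP; apply: prime_gt0.
  by apply: lt_INR; apply/ltP.
have h2 := Rmult_lt_compat_r _ _ _ (Rinv_0_lt_compat _ lnK) hl.
replace (INR m * ln (INR K) * / ln (INR K))%R with (INR m) in h2 by (field; apply: Rgt_not_eq; exact: lnK).
rewrite S_INR; unfold Rdiv; exact: Rplus_lt_compat_r.
Qed.
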